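(* Let $P$ be a real polynomial of degree $d$. Let $B$ be a set of $|B|=100d^2$ equally spaced points in $[0,1]$, and let $A\subseteq B$ with $|A|\ge 0.98|B|$. If $|P(x)|\le1$ for every $x\in A$, then $|P(x)|\le 2^{O(d)}$ for all $x\in[0,1]$. *)

(* Defs.v *)
From mathcomp Require Import all_boot all_order all_algebra.
From mathcomp Require Import reals.
Set Implicit Arguments. Unset Strict Implicit. Unset Printing Implicit Defensive.
Import Order.TTheory GRing.Theory Num.Theory.
Local Open Scope ring_scope.

Definition equi_pt (R : realType) (N : nat) (i : 'I_N) : R :=
  (nat_of_ord i)%:R / (N.-1)%:R.

(* Main.v *)
Require Import Defs.
From mathcomp Require Import all_boot all_order all_algebra.
From mathcomp Require Import reals.
From mathcomp Require Import sequences exp qpoly.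
From mathcomp Require Import lra ring zify.
Import Order.TTheory GRing.Theory Num.Theory.

Lemma prod_left i : (\prod_(0 <= j < i) (i - j) = i`!)%N.
Proof.
elim: i => [|i IH]; first by rewrite big_geq.
rewrite big_nat_recl // subn0 factS; congr (_ * _).
by rewrite -IH; apply: eq_bigr => j _; rewrite subSS.
Qed.

Lemma prod_right i k : (\prod_(i.+1 <= j < (i + k).+1) (j - i) = k`!)%N.
Proof.
elim: k => [|k IH]; first by rewrite addn0 big_geq.
rewrite addnS big_nat_recr /= ?ltnS ?leq_addr // IH factS mulnC; congr (_ * _).
by rewrite -addnS addKn.
Qed.

Lemma prod_dist d i : (i <= d)%N ->
  (\prod_(j < d.+1 | nat_of_ord j != i) ((i - j) + (j - i)) = i`! * (d - i)`!)%N.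
Proof.
move=> hid.
rewrite -(big_mkord (fun j => j != i) (fun j => ((i - j) + (j - i))%N)).
rewrite (@big_cat_nat _ _ _ i) //=; last by rewrite ltnW.
congr (_ * _).
  rewrite -prod_left big_nat_cond [RHS]big_nat_cond.
  apply: congr_big => // j.
    by rewrite andbT; case: (ltnP j i) => h; rewrite ?andbF ?andbT // (ltn_eqF h) andbT.
  by move=> /andP[/andP[_ h] _]; rewrite (eqP (ltnW h)) addn0.
rewrite big_ltn_cond ?ltnS // eqxx /=.
have -> : d.+1 = (i + (d - i)).+1 by rewrite subnKC.
rewrite -(prod_right i (d - i)) big_nat_cond [RHS]big_nat_cond.
apply: congr_big => // j.
  rewrite andbT; apply/andP/idP => [[]//|h]; split => //.
  by case/andP: h => h _; rewrite gtn_eqF.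
by move=> /andP[/andP[h _] _]; rewrite (eqP (ltnW h)).
Qed.

Lemma sorted_gap (s : seq nat) k l : sorted ltn s -> (k <= l < size s)%N ->
  (l - k + nth 0 s k <= nth 0 s l)%N.
Proof.
move=> ss; elim: l => [|l IH]; first by case: k.
case/andP=> hk hl.
have [->|hkl] := eqVneq k l.+1; first by rewrite subnn add0n.
have hk' : (k <= l)%N by lia.
have := IH (introT andP (conj hk' (ltnW hl))).
have h2 : (nth 0 s l < nth 0 s l.+1)%N.
  apply: (@sorted_ltn_nth _ _ ltn_trans 0 s ss l l.+1).
  - by rewrite inE; apply: ltnW.
  - by rewrite inE.
  - by [].
have h3 : (nth 0 s k <= nth 0 s l)%N.
  have [->//|hkl'] := eqVneq k l.
  apply: ltnW; apply: (@sorted_ltn_nth _ _ ltn_trans 0 s ss k l).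
  - by rewrite inE; apply: leq_ltn_trans hk' (ltnW hl).
  - by rewrite inE; apply: ltnW.
  - by lia.
lia.
Qed.

Lemma sorted_enum_val N (A : {set 'I_N}) : sorted ltn [seq val i | i <- enum A].
Proof.
rewrite -deprecated_filter_index_enum.
apply: (subseq_sorted ltn_trans (s2 := [seq val i | i <- index_enum 'I_N])).
  by apply: map_subseq; apply: filter_subseq.
rewrite -(filter_predT (index_enum _)) deprecated_filter_index_enum.
by have := val_enum_ord N; rewrite /enum_mem => ->; apply: iota_ltn_sorted.
Qed.

Lemma nodes N (A : {set 'I_N}) d m : (d * m < #|A|)%N ->
  exists f : nat -> 'I_N, (forall j, (j <= d)%N -> f j \in A) /\
    (forall i j, (i <= j <= d)%N -> ((j - i) * m + f i <= f j)%N).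
Proof.
move=> hA.
have [x0 x0A] : exists x0, x0 \in A by apply/card_gt0P; apply: leq_ltn_trans hA.
exists (fun j => nth x0 (enum A) (j * m)); split.
  move=> j hj; rewrite -mem_enum; apply: mem_nth; rewrite -cardE.
  by apply: leq_ltn_trans hA; rewrite leq_mul2r hj orbT.
move=> i j /andP[hij hjd].
have hs := @sorted_enum_val N A.
have e k : (k < #|A|)%N -> val (nth x0 (enum A) k) = nth 0 [seq val i | i <- enum A] k.
  by move=> hk; rewrite (nth_map x0) // -cardE.
have hjA : (j * m < #|A|)%N by apply: leq_ltn_trans hA; rewrite leq_mul2r hjd orbT.
have hiA : (i * m < #|A|)%N by apply: leq_ltn_trans hjA; rewrite leq_mul2r hij orbT.
rewrite e // e // mulnBl.
apply: sorted_gap => //; rewrite size_map -cardE hjA andbT leq_mul2r hij orbT //.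
Qed.

Local Open Scope ring_scope.

Lemma bin_le_exp2 n i : ('C(n, i) <= 2 ^ n)%N.
Proof.
elim: n i => [|n IH] [|i] //; first by rewrite bin0 expn_gt0.
by rewrite binS expnS mul2n -addnn leq_add.
Qed.

Lemma fact_lb (R : realType) n : (n ^ n <= 4 ^ n * n`!)%N.
Proof.
case: n => [|k] //.
have e2 : expR (2^-1 : R) <= 2.
  have := expR_ge1Dx (- (2^-1 : R)).
  rewrite expRN => h.
  have hp := expR_gt0 (2^-1 : R).
  have h3 : (1 - 2^-1) * expR (2^-1 : R) <= 1.
    rewrite -[leRHS](@mulVf _ (expR (2^-1 : R))) ?gt_eqF //.
    by rewrite ler_wpM2r // ltW.
  lra.
set n := k.+1.
have h1 := expR_ge1Dxn k (ler0n R n).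
have h2 : expR (n%:R : R) <= 4 ^+ n.
  have e : (n%:R : R) = ((2 * n)%N)%:R * 2^-1.
    by rewrite natrM mulrAC mulfV ?mul1r // pnatr_eq0.
  rewrite e expRM_natl.
  apply: (@le_trans _ _ (2 ^+ (2 * n))).
    by rewrite lerXn2r // ?nnegrE ?ltW ?expR_gt0.
  by rewrite exprM; apply: lerXn2r; rewrite ?nnegrE //; lra.
have h3 : (n%:R : R) ^+ n <= 4 ^+ n * n`!%:R.
  rewrite -ler_pdivrMr ?ltr0n ?fact_gt0 //; lra.
by rewrite -(ler_nat R) natrM !natrX.
Qed.

Lemma key_nat (R : realType) d i : (i <= d)%N ->
  ((2 * d) ^ d <= 16 ^ d * (i`! * (d - i)`!))%N.
Proof.
move=> hi.
have -> : ((2 * d) ^ d = 2 ^ d * d ^ d)%N by rewrite expnMn.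
have -> : (16 ^ d = 2 ^ d * (4 ^ d * 2 ^ d))%N by rewrite -!expnMn.
rewrite -mulnA leq_mul2l; apply/orP; right.
apply: leq_trans (fact_lb R d) _.
rewrite -(bin_fact hi) -mulnA leq_mul2l; apply/orP; right.
by rewrite leq_mul2r bin_le_exp2 orbT.
Qed.

Lemma interp_bound (R : realType) (d : nat) (P : {poly R}) (t : nat -> R) :
  (0 < d)%N -> (size P <= d.+1)%N ->
  (forall j, (j <= d)%N -> 0 <= t j <= 1) ->
  (forall j, (j <= d)%N -> `|P.[t j]| <= 1) ->
  (forall i j, (i <= j <= d)%N -> (j - i)%:R / (2 * d)%:R <= t j - t i) ->
  forall y, 0 <= y <= 1 -> `|P.[y]| <= 2 ^+ (5 * d).
Proof.
move=> d0 sP t01 Pt gap y y01.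
have c0 : 0 < ((2 * d)%:R : R) by rewrite ltr0n muln_gt0 d0.
have gap2 i j : (i <= d)%N -> (j <= d)%N ->
    ((i - j) + (j - i))%:R / (2 * d)%:R <= `|t i - t j|.
  move=> hi hj; case: (leqP i j) => hij.
    have -> : (i - j = 0)%N by apply/eqP.
    rewrite add0n distrC; apply: le_trans (gap i j _) (ler_norm _).
    by rewrite hij hj.
  have -> : (j - i = 0)%N by apply/eqP; apply: ltnW.
  rewrite addn0; apply: le_trans (gap j i _) (ler_norm _).
  by rewrite (ltnW hij) hi.
pose x := fun j : nat => if (j <= d)%N then t j else j%:R + 2.
have xt (j : 'I_d.+1) : x j = t j.
  by rewrite /x; have -> : (j <= d)%N by rewrite -ltnS.
have x_inj : injective x.
  move=> a b; rewrite /x.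
  case: (leqP a d) => ha; case: (leqP b d) => hb.
  - move=> eab; have := gap2 a b ha hb; rewrite eab subrr normr0.
    rewrite ler_pdivrMr // mul0r lern0 => h; lia.
  - move=> e; have := t01 a ha; rewrite e => /andP[_ h1].
    by move: h1; rewrite -natrD -[1]/(1%:R) ler_nat addn2.
  - move=> e; have := t01 b hb; rewrite -e => /andP[_ h1].
    by move: h1; rewrite -natrD -[1]/(1%:R) ler_nat addn2.
  - by move/addIr/eqP; rewrite eqr_nat => /eqP.
have hP := lagrange_gen (ltn0Sn d) x_inj sP.
rewrite hP horner_sum.
apply: (le_trans (ler_norm_sum _ _ _)).
apply: (@le_trans _ _ (\sum_(i < d.+1) (16 : R) ^+ d)).
  apply: ler_sum => i _.
  rewrite (lagrangeE (ltn0Sn d) x_inj) /= !hornerCM.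
  set p := \prod_(j < d.+1 | j != i) ('X - (x j)%:P).
  have hi : (i <= d)%N by rewrite -ltnS.
  have h1 : `|P.[x i]| <= 1 by rewrite xt; apply: Pt.
  have h2 : `|p.[y]| <= 1.
    rewrite /p horner_prod normr_prod.
    apply: prodr_ile1 => j _; rewrite normr_ge0 /= hornerXsubC xt.
    have hj : (j <= d)%N by rewrite -ltnS.
    move: (t01 j hj) y01 => /andP[h3 h4] /andP[h5 h6].
    rewrite ler_norml; apply/andP; split; clear -h3 h4 h5 h6; lra.
  have h3 : (16 ^+ d)^-1 <= `|p.[x i]|.
    rewrite /p horner_prod normr_prod.
    apply: (@le_trans _ _ (\prod_(j < d.+1 | j != i) (((i - j) + (j - i))%:R / (2 * d)%:R))).
      rewrite big_split /=.
      have -> : \prod_(j < d.+1 | j != i) ((2 * d)%:R^-1 : R) = ((2 * d)%:R^-1) ^+ d.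
        transitivity (\prod_(j in predC1 i) ((2 * d)%:R^-1 : R)); first by apply: eq_bigl.
        by rewrite prodr_const cardC1 card_ord.
      rewrite -natr_prod.
      have -> : (\prod_(j < d.+1 | j != i) ((i - j + (j - i)))%N) = (i`! * (d - i)`!)%N.
        by rewrite -(prod_dist d i hi); apply: eq_bigl.
      have p16 : (0 : R) < 16 ^+ d by rewrite exprn_gt0.
      have pc : (0 : R) < (2 * d)%:R ^+ d by rewrite exprn_gt0.
      rewrite exprVn ler_pdivlMr // mulrC ler_pdivrMr //.
      rewrite -!natrX -natrM ler_nat [X in (_ <= X)%N]mulnC; exact: (key_nat R d i hi).
    apply: ler_prod => j _; rewrite divr_ge0 ?ler0n ?(ltW c0) //= hornerXsubC !xt.
    by apply: gap2 => //; rewrite -ltnS.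
  rewrite normrM normrM normfV.
  have hpx : 0 < `|p.[x i]| by apply: lt_le_trans h3; rewrite invr_gt0 exprn_gt0.
  have h4 : `|p.[x i]|^-1 <= 16 ^+ d.
    by rewrite -[16 ^+ d]invrK lef_pV2 ?posrE ?invr_gt0 ?exprn_gt0.
  have h5 : `|p.[x i]|^-1 * `|p.[y]| <= 16 ^+ d.
    rewrite -[leRHS]mulr1.
    apply: (ler_pM _ _ h4 h2); by rewrite ?invr_ge0 ?normr_ge0.
  rewrite -[leRHS]mul1r.
  apply: (ler_pM _ _ h1 h5); by rewrite ?mulr_ge0 ?invr_ge0 ?normr_ge0.
rewrite sumr_const card_ord -[_ *+ d.+1]mulr_natr -natrX -natrM -natrX ler_nat.
rewrite mulnC expnM (_ : (2 ^ 5 = 2 * 16)%N) // expnMn leq_mul2r.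
by rewrite ltn_expl // orbT.
Qed.


Theorem lemma6 :
  exists C : nat,
  forall (R : realType) (d : nat) (P : {poly R}),
    (1 <= d)%N ->
    size P = d.+1 ->
    forall A : {set 'I_(100 * d ^ 2)},
      (49 * (100 * d ^ 2) <= 50 * #|A|)%N ->
      (forall i, i \in A -> `|P.[equi_pt R i]| <= 1) ->
      forall x : R, 0 <= x <= 1 -> `|P.[x]| <= 2 ^+ (C * d).
Proof.
exists 5%N => R d P d1 sP A hA hP y y01.
have hdm : (d * (97 * d) < #|A|)%N.
  have hA' : (49 * (100 * (d * d)) <= 50 * #|A|)%N by rewrite mulnn.
  move: hA'; generalize #|A| => a; nia.
have [f [fA fgap]] := @nodes _ A d (97 * d)%N hdm.
have e2 : (d ^ 2 = d * d)%N by rewrite mulnn.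
have hN : (0 < (100 * d ^ 2).-1)%N by rewrite e2; nia.
have hNR : (0 : R) < ((100 * d ^ 2).-1)%:R by rewrite ltr0n.
have c0 : (0 : R) < (2 * d)%:R by rewrite ltr0n; lia.
apply: (@interp_bound R d P (fun j => equi_pt R (f j))) => //.
- by rewrite sP.
- move=> j hj; rewrite /equi_pt; apply/andP; split.
    by rewrite divr_ge0 // ler0n.
  rewrite ler_pdivrMr // mul1r ler_nat.
  have := ltn_ord (f j); lia.
- by move=> j hj; apply: hP; apply: fA.
move=> i j hij; rewrite /equi_pt -mulrBl.
have hf := fgap i j hij.
rewrite -natrB; last exact: leq_trans (leq_addl _ _) hf.
rewrite ler_pdivrMr // mulrAC ler_pdivlMr // -!natrM ler_nat.
apply: (@leq_trans ((j - i) * (97 * d) * (2 * d))%N).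
  rewrite -mulnA leq_mul2l; apply/orP; right; rewrite e2; nia.
rewrite leq_mul2r; apply/orP; right; rewrite leq_subRL; first by rewrite addnC.
exact: leq_trans (leq_addl _ _) hf.
Qed.
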